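(* (a) $\mathbf{Ck}$-tableaux and $\mathbf{CK}$-tableaux are sound for Segerberg models: if a finite set of formulas $\{\theta_1,\dots,\theta_n\}$ is satisfiable in some Segerberg model, then no $\mathbf{Ck}$- or $\mathbf{CK}$-tableau with assumptions $1:\theta_1,\dots,1:\theta_n$ is closed. (b) $\mathbf{Vc}$-tableaux are sound for $\mathbf{VC}$-models: if $\{\theta_1,\dots,\theta_n\}$ is satisfiable in some $\mathbf{VC}$-model, then no $\mathbf{Vc}$-tableau with assumptions $1:\theta_1,\dots,1:\theta_n$ is closed.
   Context: Formulas: built from propositional variables and the constant $\bot$ using $\lnot$, the binary connectives $\supset,\land,\lor$, and two binary conditional operators $[\phi]\psi$ and $\langle\phi\rangle\psi$ (treated as primitive by tableau rules). $\top$ abbreviates $\lnot\bot$. Segerberg model: $M=\langle U,P,R,V\rangle$ with $U\neq\emptyset$, $P\subseteq\wp(U)$, $R:P\to\wp(U\times U)$, $V:\mathrm{Var}\to P$, such that $\emptyset,U\in P$; $P$ is closed under complement, binary intersection and union; and for $S,T\in P$, $\{x\in U\mid R_S(x)\subseteq T\}\in P$, where $R_S=R(S)$ and $R_S(x)=\{y\mid (x,y)\in R_S\}$. Truth: $M,x\not\models\bot$; $M,x\models p$ iff $x\in V(p)$; Boolean connectives as usual; $M,x\models[\phi]\psi$ iff $M,y\models\psi$ for all $y\in R_\phi(x)$; $M,x\models\langle\phi\rangle\psi$ iff $M,y\models\psi$ for some $y\in R_\phi(x)$; here $\|\phi\|=\{x\mid M,x\models\phi\}$ and $R_\phi=R_{\|\phi\|}$.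 A set of formulas is satisfiable in $M$ if all its members are true at a common world. A $\mathbf{VC}$-model is a Segerberg model such that for all $S,T\in P$ and $x\in U$: (1) $R_S(x)\subseteq S$; (2) $R_S(x)\cap T\neq\emptyset\Rightarrow R_T(x)\neq\emptyset$; (3) $R_U(x)\subseteq\{x\}$; (4) $x\in R_U(x)$; (5) $R_S(x)\cap T\subseteq R_{S\cap T}(x)$; (6) $R_S(x)\cap T\neq\emptyset\Rightarrow R_{S\cap T}(x)\subseteq R_S(x)\cap T$. Tableaux: indices are positive integers. Prefixed formulas are $i:\phi$ and $i\,r_\phi\,j$. A tableau with assumptions $A$ (a set of prefixed formulas) is a finite downward-branching tree labelled by prefixed formulas, each either in $A$ or obtained by applying a branch extension rule to prefixed formulas on its branch; non-branching rules append their conclusions, branching rules split the branch into one child per alternative, each alternative appending its listed conclusions. A branch is closed if it contains $i:\chi$ and $i:\lnot\chi$, or $i:\bot$; a tableau is closed if all branches are closed. Basic rules: from $i:\phi\land\psi$ add $i:\phi,i:\psi$; from $i:\lnot(\phi\land\psi)$ branch $i:\lnot\phi\mid i:\lnot\psi$; from $i:\phi\lor\psi$ branch $i:\phi\mid i:\psi$; from $i:\lnot(\phi\lor\psi)$ add $i:\lnot\phi,i:\lnot\psi$; from $i:\phi\supset\psi$ branch $i:\lnot\phi\mid i:\psi$; from $i:\lnot(\phi\supset\psi)$ add $i:\phi,i:\lnot\psi$; from $i:\lnot\lnot\phi$ add $i:\phi$; ($\Box$) from $i:[\phi]\psi$ and $i\,r_\phi\,j$ add $j:\psi$; ($\lnot\Box$)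 from $i:\lnot[\phi]\psi$ add $i\,r_\phi\,j$ and $j:\lnot\psi$, $j$ new; ($\Diamond$) from $i:\langle\phi\rangle\psi$ add $i\,r_\phi\,j$ and $j:\psi$, $j$ new; ($\lnot\Diamond$) from $i:\lnot\langle\phi\rangle\psi$ and $i\,r_\phi\,j$ add $j:\lnot\psi$. (cut) for any index $i$ already on the branch and any $\phi$, branch $i:\phi\mid i:\lnot\phi$. (ea) from $i\,r_\phi\,j$ and any $\psi$, branch ($k:\lnot\phi$, $k:\psi$) $\mid$ ($k:\phi$, $k:\lnot\psi$) $\mid$ $i\,r_\psi\,j$, $k$ new. (R1) from $i\,r_\phi\,j$ add $j:\phi$. (R2) from $j:\psi$ and $i\,r_\phi\,j$ add $i\,r_\psi\,k$, $k$ new. (R3) from $i:\phi$, $j:\lnot\phi$, $i\,r_\top\,j$ add $j:\phi$. (R4) for any index $i$ on the branch add $i\,r_\top\,i$. (R5) from $j:\psi$ and $i\,r_\phi\,j$ add $i\,r_{\phi\land\psi}\,j$. (R6) from $j:\psi$, $i\,r_\phi\,j$, $i\,r_{\phi\land\psi}\,k$ add $k:\psi$ and $i\,r_\phi\,k$. Systems: $\mathbf{Ck}$ = basic rules; $\mathbf{CK}$ = basic rules + cut + ea; $\mathbf{Vc}$ = basic rules + R1–R6. *)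

(* Defs.v *)
From Stdlib Require Import List.
Import ListNotations.

Inductive form : Type :=
| FVar : nat -> form
| FBot : form
| FNeg : form -> form
| FImp : form -> form -> form
| FAnd : form -> form -> form
| FOr  : form -> form -> form
| FBox : form -> form -> form   (* [phi] psi *)
| FDia : form -> form -> form.  (* <phi> psi *)

Definition FTop : form := FNeg FBot.

(* ---------- Segerberg models ----------
   Subsets of U are predicates U -> Prop; P is the collection of admissible
   sets; R S is the relation R_S (only ever used on S in P). *)
Record SegModel : Type := {
  U : Type;
  P : (U -> Prop) -> Prop;
  R : (U -> Prop) -> U -> U -> Prop;
  V : nat -> U -> Prop;
  U_nonempty : inhabited U;
  P_empty : P (fun _ => False);
  P_full : P (fun _ => True);
  P_compl : forall S, P S -> P (fun x => ~ S x);
  P_inter : forall S T, P S -> P T -> P (fun x => S x /\ T x);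
  P_union : forall S T, P S -> P T -> P (fun x => S x \/ T x);
  P_box : forall S T, P S -> P T -> P (fun x => forall y, R S x y -> T y);
  V_in_P : forall p, P (V p)
}.

Fixpoint sat (M : SegModel) (x : U M) (f : form) {struct f} : Prop :=
  match f with
  | FVar p => V M p x
  | FBot => False
  | FNeg a => ~ sat M x a
  | FImp a b => sat M x a -> sat M x b
  | FAnd a b => sat M x a /\ sat M x b
  | FOr a b => sat M x a \/ sat M x b
  | FBox a b => forall y, R M (fun z => sat M z a) x y -> sat M y b
  | FDia a b => exists y, R M (fun z => sat M z a) x y /\ sat M y b
  end.

Definition satisfiable_in (M : SegModel) (G : list form) : Prop :=
  exists x : U M, forall f, In f G -> sat M x f.

Definition VC_model (M : SegModel) : Prop :=
  forall (S T : U M -> Prop) (x : U M), P M S -> P M T ->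
    (forall y, R M S x y -> S y) /\
    ((exists y, R M S x y /\ T y) -> exists y, R M T x y) /\
    (forall y, R M (fun _ => True) x y -> y = x) /\
    R M (fun _ => True) x x /\
    (forall y, R M S x y -> T y -> R M (fun z => S z /\ T z) x y) /\
    ((exists y, R M S x y /\ T y) ->
       forall y, R M (fun z => S z /\ T z) x y -> R M S x y /\ T y).

Inductive pform : Type :=
| PF : nat -> form -> pform            (* i : phi *)
| PR : nat -> form -> nat -> pform.    (* i r_phi j *)

Definition pf_indices (a : pform) : list nat :=
  match a with PF i _ => [i] | PR i _ j => [i; j] end.

Definition branch_indices (br : list pform) : list nat :=
  flat_map pf_indices br.

Definition on_branch (i : nat) (br : list pform) : Prop := In i (branch_indices br).

(* indices are positive integers; a new index does not occur on the branch *)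
Definition new_index (k : nat) (br : list pform) : Prop :=
  0 < k /\ ~ on_branch k br.

Inductive system : Type := Ck | CK | Vc.

(* rule_app sys br alts : some rule of sys applies to prefixed formulas on the
   branch br, and alts lists the alternatives (one per child), each being the
   list of conclusions appended on that child. *)
Inductive rule_app (sys : system) (br : list pform) : list (list pform) -> Prop :=
| r_and : forall i a b, In (PF i (FAnd a b)) br ->
    rule_app sys br [[PF i a; PF i b]]
| r_nand : forall i a b, In (PF i (FNeg (FAnd a b))) br ->
    rule_app sys br [[PF i (FNeg a)]; [PF i (FNeg b)]]
| r_or : forall i a b, In (PF i (FOr a b)) br ->
    rule_app sys br [[PF i a]; [PF i b]]
| r_nor : forall i a b, In (PF i (FNeg (FOr a b))) br ->
    rule_app sys br [[PF i (FNeg a); PF i (FNeg b)]]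
| r_imp : forall i a b, In (PF i (FImp a b)) br ->
    rule_app sys br [[PF i (FNeg a)]; [PF i b]]
| r_nimp : forall i a b, In (PF i (FNeg (FImp a b))) br ->
    rule_app sys br [[PF i a; PF i (FNeg b)]]
| r_nneg : forall i a, In (PF i (FNeg (FNeg a))) br ->
    rule_app sys br [[PF i a]]
| r_box : forall i j a b, In (PF i (FBox a b)) br -> In (PR i a j) br ->
    rule_app sys br [[PF j b]]
| r_nbox : forall i j a b, In (PF i (FNeg (FBox a b))) br -> new_index j br ->
    rule_app sys br [[PR i a j; PF j (FNeg b)]]
| r_dia : forall i j a b, In (PF i (FDia a b)) br -> new_index j br ->
    rule_app sys br [[PR i a j; PF j b]]
| r_ndia : forall i j a b, In (PF i (FNeg (FDia a b))) br -> In (PR i a j) br ->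
    rule_app sys br [[PF j (FNeg b)]]
| r_cut : sys = CK -> forall i a, on_branch i br ->
    rule_app sys br [[PF i a]; [PF i (FNeg a)]]
| r_ea : sys = CK -> forall i j k a b, In (PR i a j) br -> new_index k br ->
    rule_app sys br [[PF k (FNeg a); PF k b]; [PF k a; PF k (FNeg b)]; [PR i b j]]
| r_R1 : sys = Vc -> forall i j a, In (PR i a j) br ->
    rule_app sys br [[PF j a]]
| r_R2 : sys = Vc -> forall i j k a b, In (PF j b) br -> In (PR i a j) br ->
    new_index k br ->
    rule_app sys br [[PR i b k]]
| r_R3 : sys = Vc -> forall i j a, In (PF i a) br -> In (PF j (FNeg a)) br ->
    In (PR i FTop j) br ->
    rule_app sys br [[PF j a]]
| r_R4 : sys = Vc -> forall i, on_branch i br ->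
    rule_app sys br [[PR i FTop i]]
| r_R5 : sys = Vc -> forall i j a b, In (PF j b) br -> In (PR i a j) br ->
    rule_app sys br [[PR i (FAnd a b) j]]
| r_R6 : sys = Vc -> forall i j k a b, In (PF j b) br -> In (PR i a j) br ->
    In (PR i (FAnd a b) k) br ->
    rule_app sys br [[PF k b; PR i a k]].

Definition branch_closed (br : list pform) : Prop :=
  (exists i c, In (PF i c) br /\ In (PF i (FNeg c)) br) \/
  (exists i, In (PF i FBot) br).

(* closes sys A br : there is a finite tree extending the branch br (listed
   newest-first) every node of which is an assumption from A or a conclusion of a
   rule of sys applied to formulas on its branch, all of whose branches are
   closed. *)
Inductive closes (sys : system) (A : list pform) : list pform -> Prop :=
| cl_closed : forall br, branch_closed br -> closes sys A br
| cl_assm : forall br a, In a A -> closes sys A (a :: br) -> closes sys A br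
| cl_rule : forall br alts, rule_app sys br alts ->
    (forall alt, In alt alts -> closes sys A (alt ++ br)) -> closes sys A br.

Definition closed_tableau_exists (sys : system) (A : list pform) : Prop :=
  closes sys A [].

Definition assumptions (thetas : list form) : list pform :=
  map (fun t => PF 1 t) thetas.

(* Main.v *)
Require Import Defs.
From Stdlib Require Import List Classical FunctionalExtensionality PropExtensionality PeanoNat.
Import ListNotations.

Lemma P_ext (M : SegModel) (S T : U M -> Prop) :
  (forall x, S x <-> T x) -> P M S -> P M T.
Proof.
  intros H HS. replace T with S; auto.
  extensionality x. apply propositional_extensionality. auto.
Qed.

Lemma sat_P (M : SegModel) (a : form) : P M (fun z => sat M z a).
Proof.
  induction a; simpl.
  - apply V_in_P.
  - apply P_empty.
  - apply P_compl; auto.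
  - apply P_ext with (fun x => ~ sat M x a1 \/ sat M x a2).
    + intros x; split; [intros [H|H] H'; tauto|].
      intros H; destruct (classic (sat M x a1)); tauto.
    + apply P_union; auto. apply P_compl; auto.
  - apply P_inter; auto.
  - apply P_union; auto.
  - apply P_box; auto.
  - apply P_ext with (fun x => ~ forall y, R M (fun z => sat M z a1) x y -> ~ sat M y a2).
    + intros x; split.
      * intros H. apply NNPP; intros H'; apply H; intros y Hy Hs; apply H'; eauto.
      * intros [y [Hy Hs]] H; eapply H; eauto.
    + apply P_compl, P_box; auto. apply P_compl; auto.
Qed.

Definition holds (M : SegModel) (f : nat -> U M) (a : pform) : Prop :=
  match a with
  | PF i p => sat M (f i) p
  | PR i p j => R M (fun z => sat M z p) (f i) (f j)
  end.

Definition good (M : SegModel) (x0 : U M) (br : list pform) : Prop :=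
  on_branch 1 br /\ exists f : nat -> U M, f 1 = x0 /\ forall a, In a br -> holds M f a.

Definition upd {X} (f : nat -> X) (k : nat) (y : X) : nat -> X :=
  fun n => if Nat.eqb n k then y else f n.

Lemma upd_neq {X} (f : nat -> X) k y i : i <> k -> upd f k y i = f i.
Proof. intros H; unfold upd; destruct (Nat.eqb_spec i k); congruence. Qed.

Lemma upd_eq {X} (f : nat -> X) k y : upd f k y k = y.
Proof. unfold upd; rewrite Nat.eqb_refl; auto. Qed.

Lemma in_br_index a br i : In a br -> In i (pf_indices a) -> on_branch i br.
Proof. intros. unfold on_branch, branch_indices. apply in_flat_map; eauto. Qed.

Lemma on_branch_app alt br i : on_branch i br -> on_branch i (alt ++ br).
Proof.
  unfold on_branch, branch_indices. intros H. rewrite flat_map_app.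
  apply in_or_app; auto.
Qed.

Lemma upd_holds M f k y br :
  ~ on_branch k br -> forall a, In a br -> holds M f a -> holds M (upd f k y) a.
Proof.
  intros Hk a Ha Hh. destruct a as [i p | i p j]; simpl in *.
  - rewrite upd_neq; auto. intros ->. apply Hk. eapply in_br_index; eauto. simpl; auto.
  - rewrite !upd_neq; auto; intros ->; apply Hk; eapply in_br_index; eauto; simpl; auto.
Qed.

Lemma good_ext M x0 br alt (f : nat -> U M) :
  on_branch 1 br -> f 1 = x0 -> (forall a, In a br -> holds M f a) ->
  (forall a, In a alt -> holds M f a) -> good M x0 (alt ++ br).
Proof.
  intros H1 Hf Hb Ha. split. apply on_branch_app; auto.
  exists f; split; auto. intros a Hin; apply in_app_or in Hin; destruct Hin; auto.
Qed.

Lemma new_ok M x0 br k (f : nat -> U M) y :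
  on_branch 1 br -> new_index k br -> f 1 = x0 -> (forall a, In a br -> holds M f a) ->
  upd f k y 1 = x0 /\ (forall a, In a br -> holds M (upd f k y) a) /\ upd f k y k = y /\
  (forall n, on_branch n br -> upd f k y n = f n).
Proof.
  intros H1 [_ Hk] Hf Hb. split; [|split; [|split]].
  - rewrite (upd_neq f k y 1); auto. intro E; subst; auto.
  - intros a Ha; apply upd_holds with br; auto.
  - apply upd_eq.
  - intros n Hn; apply upd_neq; intros ->; auto.
Qed.

Ltac one_alt f := eexists; split; [left; reflexivity|];
  apply good_ext with f; auto; let a0 := fresh "a0" in let Hin := fresh "Hin" in
  intros a0 Hin; repeat (destruct Hin as [Hin|Hin]; [subst a0; simpl|]);
  try (exfalso; exact Hin).

Lemma rule_sound M x0 sys br alts :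
  rule_app sys br alts -> (sys = Vc -> VC_model M) -> good M x0 br ->
  exists alt, In alt alts /\ good M x0 (alt ++ br).
Proof.
  intros Hr HVC [Hone [f [Hf Hb]]].
  destruct Hr as [i a b H|i a b H|i a b H|i a b H|i a b H|i a b H|i a H|i j a b H H0|i j a b H H0|i j a b H H0|i j a b H H0|e i a H|e i j k a b H0 H2|e i j a H|e i j k a b H H0 H2|e i j a H H0 H2|e i H|e i j a b H H0|e i j k a b H H0 H2].
  - pose proof (Hb _ H) as Hh; simpl in Hh. one_alt f; tauto.
  - pose proof (Hb _ H) as Hh; simpl in Hh.
    destruct (classic (sat M (f i) a)).
    + exists [PF i (FNeg b)]; split; [right; left; reflexivity|].
      apply good_ext with f; auto; intros ? [<-|[]]; simpl; tauto.
    + one_alt f; auto.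
  - pose proof (Hb _ H) as Hh; simpl in Hh. destruct Hh.
    + one_alt f; auto.
    + exists [PF i b]; split; [right; left; reflexivity|].
      apply good_ext with f; auto; intros ? [<-|[]]; simpl; tauto.
  - pose proof (Hb _ H) as Hh; simpl in Hh. one_alt f; tauto.
  - pose proof (Hb _ H) as Hh; simpl in Hh.
    destruct (classic (sat M (f i) a)).
    + exists [PF i b]; split; [right; left; reflexivity|].
      apply good_ext with f; auto; intros ? [<-|[]]; simpl; tauto.
    + one_alt f; auto.
  - pose proof (Hb _ H) as Hh; simpl in Hh.
    destruct (classic (sat M (f i) a)).
    + one_alt f; tauto.
    + exfalso; tauto.
  - pose proof (Hb _ H) as Hh; simpl in Hh. one_alt f; apply NNPP; auto.
  - pose proof (Hb _ H) as Hh; pose proof (Hb _ H0) as Hr; simpl in *. one_alt f; auto.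
  - pose proof (Hb _ H) as Hh; simpl in Hh.
    apply not_all_ex_not in Hh. destruct Hh as [y Hy]. apply imply_to_and in Hy.
    destruct Hy as [Hy1 Hy2].
    destruct (new_ok M x0 br j f y Hone H0 Hf Hb) as (G1 & G2 & G3 & G4).
    one_alt (upd f j y).
    + rewrite G3, G4; auto. eapply in_br_index; eauto; simpl; auto.
    + rewrite G3; auto.
  - pose proof (Hb _ H) as Hh; simpl in Hh. destruct Hh as [y [Hy1 Hy2]].
    destruct (new_ok M x0 br j f y Hone H0 Hf Hb) as (G1 & G2 & G3 & G4).
    one_alt (upd f j y).
    + rewrite G3, G4; auto. eapply in_br_index; eauto; simpl; auto.
    + rewrite G3; auto.
  - pose proof (Hb _ H) as Hh; pose proof (Hb _ H0) as Hr; simpl in *. one_alt f; intro; apply Hh; eauto.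
  - destruct (classic (sat M (f i) a)).
    + one_alt f; auto.
    + exists [PF i (FNeg a)]; split; [right; left; reflexivity|].
      apply good_ext with f; auto; intros ? [<-|[]]; simpl; tauto.
  - pose proof (Hb _ H0) as Hr; simpl in Hr.
    destruct (classic (forall z, sat M z a <-> sat M z b)) as [E|NE].
    + assert (E' : (fun z => sat M z a) = (fun z => sat M z b)).
      { extensionality z; apply propositional_extensionality; auto. }
      exists [PR i b j]; split; [right; right; left; reflexivity|].
      apply good_ext with f; auto; intros ? [<-|[]]; simpl. rewrite <- E'; auto.
    + apply not_all_ex_not in NE. destruct NE as [z Hz].
      destruct (new_ok M x0 br k f z Hone H2 Hf Hb) as (G1 & G2 & G3 & G4).
      destruct (classic (sat M z a)).
      * exists [PF k a; PF k (FNeg b)]; split; [right; left; reflexivity|].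
        apply good_ext with (upd f k z); auto; intros ? [<-|[<-|[]]]; simpl; rewrite G3;
          [auto| intro; apply Hz; tauto].
      * one_alt (upd f k z); rewrite G3; auto.
        apply NNPP; intro; apply Hz; tauto.
  - destruct (HVC e (fun z => sat M z a) (fun z => sat M z a) (f i) (sat_P M a) (sat_P M a))
      as (c1 & _).
    pose proof (Hb _ H) as Hr; simpl in Hr. one_alt f; auto.
  - pose proof (Hb _ H) as Hs; pose proof (Hb _ H0) as Hr; simpl in *.
    destruct (HVC e (fun z => sat M z a) (fun z => sat M z b) (f i) (sat_P M a) (sat_P M b))
      as (_ & c2 & _).
    destruct c2 as [y Hy]; eauto.
    destruct (new_ok M x0 br k f y Hone H2 Hf Hb) as (G1 & G2 & G3 & G4).
    one_alt (upd f k y). rewrite G3, G4; auto. eapply in_br_index; eauto; simpl; auto.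
  - pose proof (Hb _ H) as Hs; pose proof (Hb _ H0) as Hn; pose proof (Hb _ H2) as Hr;
      simpl in *.
    destruct (HVC e (fun _ => True) (fun _ => True) (f i) (P_full M) (P_full M))
      as (_ & _ & c3 & _).
    assert (E : (fun z : U M => ~ False) = (fun _ => True)).
    { extensionality z; apply propositional_extensionality; tauto. }
    unfold FTop in Hr; simpl in Hr; rewrite E in Hr.
    apply c3 in Hr. rewrite Hr in Hn. tauto.
  - destruct (HVC e (fun _ => True) (fun _ => True) (f i) (P_full M) (P_full M))
      as (_ & _ & _ & c4 & _).
    assert (E : (fun z : U M => ~ False) = (fun _ => True)).
    { extensionality z; apply propositional_extensionality; tauto. }
    one_alt f. unfold FTop; simpl; rewrite E; auto.
  - pose proof (Hb _ H) as Hs; pose proof (Hb _ H0) as Hr; simpl in *.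
    destruct (HVC e (fun z => sat M z a) (fun z => sat M z b) (f i) (sat_P M a) (sat_P M b))
      as (_ & _ & _ & _ & c5 & _).
    one_alt f. apply c5; auto.
  - pose proof (Hb _ H) as Hs; pose proof (Hb _ H0) as Hr; pose proof (Hb _ H2) as Hk;
      simpl in *.
    destruct (HVC e (fun z => sat M z a) (fun z => sat M z b) (f i) (sat_P M a) (sat_P M b))
      as (_ & _ & _ & _ & _ & c6).
    assert (Hx : exists y, R M (fun z => sat M z a) (f i) y /\ sat M y b) by eauto.
    destruct (c6 Hx _ Hk). one_alt f; auto.
Qed.

Lemma rule_nonempty sys alts : rule_app sys [] alts -> False.
Proof. intros H; inversion H; simpl in *; auto; unfold on_branch in *; simpl in *; auto. Qed.

Lemma closes_sound M x0 sys A br :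
  closes sys A br -> (sys = Vc -> VC_model M) ->
  (forall a, In a A -> exists t, a = PF 1 t /\ sat M x0 t) ->
  (br = [] \/ good M x0 br) -> False.
Proof.
  intros Hc HVC HA. induction Hc as [br Hcl | br a Ha Hc IH | br alts Hr Hc IH]; intros Hg.
  - destruct Hg as [-> | [_ [f [_ Hb]]]].
    + destruct Hcl as [(i & c & H & _)|(i & H)]; inversion H.
    + destruct Hcl as [(i & c & H & H')|(i & H)].
      * apply Hb in H; apply Hb in H'; simpl in *; auto.
      * apply Hb in H; simpl in *; auto.
  - apply IH; right. destruct (HA a Ha) as [t [-> Ht]].
    split. unfold on_branch; simpl; auto.
    destruct Hg as [-> | [_ [f [Hf Hb]]]].
    + exists (fun _ => x0); split; auto. intros ? [<-|[]]; simpl; auto.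
    + exists f; split; auto. intros ? [<-|H]; simpl; auto. rewrite Hf; auto.
  - destruct Hg as [-> | Hg].
    + exfalso; eapply rule_nonempty; eauto.
    + destruct (rule_sound M x0 sys br alts Hr HVC Hg) as [alt [Hin Hg']].
      eapply IH; eauto.
Qed.

Lemma assm_ok M x0 thetas :
  (forall f, In f thetas -> sat M x0 f) ->
  forall a, In a (assumptions thetas) -> exists t, a = PF 1 t /\ sat M x0 t.
Proof.
  intros H a Ha. unfold assumptions in Ha. apply in_map_iff in Ha.
  destruct Ha as [t [<- Ht]]. eauto.
Qed.

Theorem mainTheorem8 :
  (forall (thetas : list form),
     (exists M : SegModel, satisfiable_in M thetas) ->
     ~ closed_tableau_exists Ck (assumptions thetas) /\
     ~ closed_tableau_exists CK (assumptions thetas)) /\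
  (forall (thetas : list form),
     (exists M : SegModel, VC_model M /\ satisfiable_in M thetas) ->
     ~ closed_tableau_exists Vc (assumptions thetas)).
Proof.
  split.
  - intros thetas [M [x0 Hx]]. split; intros Hc.
    + eapply (closes_sound M x0); eauto. discriminate. apply assm_ok; auto.
    + eapply (closes_sound M x0); eauto. discriminate. apply assm_ok; auto.
  - intros thetas [M [HV [x0 Hx]]] Hc.
    eapply (closes_sound M x0); eauto. apply assm_ok; auto.
Qed.
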